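(* Let $p$ be a positive integer, let $J_1,\dots,J_p\in\mathcal{D}(X)$, and let $\ell_1,\dots,\ell_p$ be positive integers. Let $\ell=\min_i\ell_i$, $\bar J_i=T^{\ell_i-\ell}J_i$ for $i=1,\dots,p$, and $\bar J(x)=\min_{i=1,\dots,p}\bar J_i(x)$ for all $x\in X$. Then $\bar J\in\mathcal{D}(X)$.
   Context: Setting: $X$ (state space) and $U$ (control space) are sets; for each $x\in X$, $U(x)\subset U$ is nonempty; $f:X\times U\to X$; the stage cost $g$ satisfies $0\le g(x,u)\le\infty$ for all $x\in X$, $u\in U(x)$. $\mathcal{E}^+(X)$ denotes the set of all functions $J:X\to[0,\infty]$. The Bellman operator $T:\mathcal{E}^+(X)\to\mathcal{E}^+(X)$ is $(TJ)(x)=\inf_{u\in U(x)}\{g(x,u)+J(f(x,u))\}$; $T^k$ is its $k$-fold composition, with $T^0J=J$. The region of decreasing is $\mathcal{D}(X)=\{J\in\mathcal{E}^+(X): (TJ)(x)\le J(x)\ \forall x\in X\}$. Standing assumption: for every $J\in\mathcal{E}^+(X)$ and every $x\in X$, the infimum defining $(TJ)(x)$ is attained. *)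

(* Defs.v *)
From mathcomp Require Import all_boot all_order all_algebra.
From mathcomp Require Import boolp classical_sets reals constructive_ereal ereal.
Set Implicit Arguments. Unset Strict Implicit. Unset Printing Implicit Defensive.
Import Order.TTheory GRing.Theory Num.Theory.
Local Open Scope classical_set_scope.
Local Open Scope ereal_scope.

Section DP.
Variables (R : realType) (X U : Type) (Uc : X -> set U) (f : X -> U -> X)
  (g : X -> U -> \bar R).

Definition Eplus (J : X -> \bar R) : Prop := forall x, 0 <= J x.

Definition bellman (J : X -> \bar R) : X -> \bar R :=
  fun x => ereal_inf [set g x u + J (f x u) | u in Uc x].

Definition decreasing_region (J : X -> \bar R) : Prop :=
  Eplus J /\ forall x, bellman J x <= J x.

End DP.

(* minimum of finitely many naturals ls_0, ..., ls_{p-1} (meaningful for p > 0);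
   the seed is the maximum, so the result is the true minimum when p > 0 *)
Definition nat_min (p : nat) (ls : 'I_p -> nat) : nat :=
  (\big[minn/(\big[maxn/0%N]_(i < p) ls i)]_(i < p) ls i)%N.

(* Main.v *)
Require Import Defs.
From mathcomp Require Import all_boot all_order all_algebra.
From mathcomp Require Import boolp classical_sets reals constructive_ereal ereal.
Import Order.TTheory GRing.Theory Num.Theory.
Local Open Scope classical_set_scope.
Local Open Scope ereal_scope.

Lemma bellman_mono (R : realType) (X U : Type) (Uc : X -> set U)
  (f : X -> U -> X) (g : X -> U -> \bar R) (J J' : X -> \bar R) :
  (forall x, J x <= J' x) -> forall x, bellman Uc f g J x <= bellman Uc f g J' x.
Proof.
move=> hJ x; rewrite /bellman; apply: le_ereal_inf_tmp => _ [u hu <-].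
apply: le_trans (leeD2l _ (hJ _)).
by apply: ereal_inf_lbound; exists u.
Qed.

Lemma bellman_pos (R : realType) (X U : Type) (Uc : X -> set U)
  (f : X -> U -> X) (g : X -> U -> \bar R)
  (hg : forall x u, Uc x u -> 0 <= g x u) (J : X -> \bar R) :
  Eplus J -> Eplus (bellman Uc f g J).
Proof.
move=> hJ x; rewrite /bellman; apply: le_ereal_inf_tmp => _ [u hu <-].
by apply: adde_ge0; [exact: hg|exact: hJ].
Qed.

Lemma iter_dec (R : realType) (X U : Type) (Uc : X -> set U)
  (f : X -> U -> X) (g : X -> U -> \bar R)
  (hg : forall x u, Uc x u -> 0 <= g x u) (J : X -> \bar R) :
  decreasing_region Uc f g J -> forall k, decreasing_region Uc f g (iter k (bellman Uc f g) J).
Proof.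
move=> [hJ0 hJ1]; elim=> [|k [ih0 ih1]] //=; split.
  exact: bellman_pos.
exact: bellman_mono.
Qed.

Theorem corollary2 (R : realType) (X U : Type) (Uc : X -> set U)
  (f : X -> U -> X) (g : X -> U -> \bar R)
  (hUc : forall x, Uc x !=set0)
  (hg : forall x u, Uc x u -> 0 <= g x u)
  (hattain : forall (J : X -> \bar R), Eplus J -> forall x,
      exists2 u, Uc x u & bellman Uc f g J x = g x u + J (f x u))
  (p : nat) (hp : (0 < p)%N)
  (Js : 'I_p -> X -> \bar R)
  (hJs : forall i, decreasing_region Uc f g (Js i))
  (ls : 'I_p -> nat) (hls : forall i, (0 < ls i)%N) :
  let l := nat_min ls in
  let Jbar_i := fun i : 'I_p => iter (ls i - l)%N (bellman Uc f g) (Js i) in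
  let Jbar := fun x => \big[Order.min/+oo]_(i < p) Jbar_i i x in
  decreasing_region Uc f g Jbar.
Proof.
move=> l Jbar_i Jbar.
have hD i : decreasing_region Uc f g (Jbar_i i) by exact: iter_dec.
have hle i x : Jbar x <= Jbar_i i x.
  by rewrite /Jbar (bigD1 i) //= ge_min lexx.
split.
  move=> x; rewrite /Jbar; apply: (big_ind (fun y => 0 <= y)) => //.
    by move=> a b ha hb; rewrite le_min ha hb.
  by move=> i _; case: (hD i) => h _; exact: h.
move=> x; rewrite /Jbar; apply: (big_ind (fun y => bellman Uc f g Jbar x <= y)); first exact: leey.
  by move=> a b ha hb; rewrite le_min ha hb.
move=> i _; apply: le_trans (@bellman_mono _ _ _ Uc f g _ _ (hle i) x) _.
by case: (hD i) => _ h; exact: h.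
Qed.
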